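(* Let $B$ be the open unit disk and $U=(u,v)\in C^1(\overline B;\mathbb R^2)$ be harmonic in $B$ with $\det DU>0$ on $\partial B$. Then $\det DU>0$ everywhere in $B$ if and only if there exists $\alpha\in[0,2\pi]$ such that $\nabla u_\alpha\neq0$ everywhere in $B$, where $u_\alpha=\cos(\alpha)u+\sin(\alpha)v$. *)

(* Defs.v *)
From Stdlib Require Import Reals.
From Coquelicot Require Import Coquelicot.
Open Scope R_scope.

Definition in_B (x y : R) : Prop := x ^ 2 + y ^ 2 < 1.
Definition in_closB (x y : R) : Prop := x ^ 2 + y ^ 2 <= 1.
Definition in_bdB (x y : R) : Prop := x ^ 2 + y ^ 2 = 1.

Definition cont_within (D : R -> R -> Prop) (f : R -> R -> R) (x y : R) : Prop :=
  forall eps : R, 0 < eps -> exists delta : R, 0 < delta /\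
    forall x' y' : R, D x' y' -> Rabs (x' - x) < delta -> Rabs (y' - y) < delta ->
      Rabs (f x' y' - f x y) < eps.

Definition dx (f : R -> R -> R) (x y : R) : R := Derive (fun t => f t y) x.
Definition dy (f : R -> R -> R) (x y : R) : R := Derive (fun t => f x t) y.

(* f ∈ C^1(closure B) with fx, fy the (continuous extensions to the closed
   disk of the) partial derivatives: f is continuous on the closed disk, its
   partial derivatives exist in B and equal fx, fy there, and fx, fy are
   continuous on the closed disk. *)
Definition C1_closB (f fx fy : R -> R -> R) : Prop :=
  (forall x y, in_B x y ->
     is_derive (fun t => f t y) x (fx x y) /\ is_derive (fun t => f x t) y (fy x y)) /\
  (forall x y, in_closB x y ->
     cont_within in_closB f x y /\ cont_within in_closB fx x y /\
     cont_within in_closB fy x y).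

Definition harmonic_B (f fx fy : R -> R -> R) : Prop :=
  (forall x y, in_B x y ->
     is_derive (fun t => f t y) x (fx x y) /\ is_derive (fun t => f x t) y (fy x y)) /\
  exists fxx fxy fyx fyy : R -> R -> R,
    forall x y, in_B x y ->
      is_derive (fun t => fx t y) x (fxx x y) /\ is_derive (fun t => fx x t) y (fxy x y) /\
      is_derive (fun t => fy t y) x (fyx x y) /\ is_derive (fun t => fy x t) y (fyy x y) /\
      cont_within in_B fxx x y /\ cont_within in_B fxy x y /\
      cont_within in_B fyx x y /\ cont_within in_B fyy x y /\
      fxx x y + fyy x y = 0.

(* Main.v *)
Require Import Defs.
From Stdlib Require Import Reals Lra Psatz.
From Coquelicot Require Import Coquelicot.
From Stdlib Require Import Classical ClassicalEpsilon.
Open Scope R_scope.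

Definition rB (x y : R) := (1 - (x^2+y^2))/8.

Lemma rB_pos x y : in_B x y -> 0 < rB x y.
Proof. unfold in_B, rB; intros; lra. Qed.

Lemma box_B x y x' y' : in_B x y -> Rabs (x'-x) < rB x y -> Rabs (y'-y) < rB x y -> in_B x' y'.
Proof.
  unfold in_B, rB; intros H H1 H2.
  set (d := (1 - (x ^ 2 + y ^ 2)) / 8) in *.
  apply Rabs_def2 in H1; apply Rabs_def2 in H2.
  assert (Hx : -1 < x < 1) by (split; nra).
  assert (Hy : -1 < y < 1) by (split; nra).
  assert (Hd : 0 < d) by (unfold d; lra).
  assert (Hd2 : d <= 1/8) by (unfold d; nra).
  replace x' with (x + (x'-x)) by ring. replace y' with (y + (y'-y)) by ring.
  set (a := x'-x) in *. set (b := y'-y) in *.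
  assert (2*x*a <= 2*d) by nra. assert (2*y*b <= 2*d) by nra.
  assert (a*a <= d*d) by nra. assert (b*b <= d*d) by nra.
  unfold d in *. nra.
Qed.

Lemma box_B2 x y u v x' y' : in_B x y -> Rabs (u-x) < rB x y / 2 -> Rabs (v-y) < rB x y / 2 ->
  Rabs (x'-u) < rB x y / 2 -> Rabs (y'-v) < rB x y / 2 -> in_B x' y'.
Proof.
  intros H a b c d. apply (box_B x y); auto.
  - replace (x'-x) with ((x'-u)+(u-x)) by ring. eapply Rle_lt_trans. apply Rabs_triang. lra.
  - replace (y'-y) with ((y'-v)+(v-y)) by ring. eapply Rle_lt_trans. apply Rabs_triang. lra.
Qed.

Lemma cw_sub (D1 D2 : R -> R -> Prop) f x y : (forall a b, D1 a b -> D2 a b) ->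
  cont_within D2 f x y -> cont_within D1 f x y.
Proof.
  intros HD H eps He. destruct (H eps He) as [d [Hd H']]. exists d; split; auto.
Qed.

Lemma cw_2d f x y : in_B x y -> cont_within in_B f x y -> continuity_2d_pt f x y.
Proof.
  intros HB H eps. destruct (H eps (cond_pos eps)) as [d [Hd H']].
  assert (Hm : 0 < Rmin d (rB x y)) by (apply Rmin_pos; auto; apply rB_pos; auto).
  exists (mkposreal _ Hm); simpl; intros u v Hu Hv.
  apply H'.
  - apply (box_B x y). auto.
    apply (Rlt_le_trans _ _ _ Hu); apply Rmin_r.
    apply (Rlt_le_trans _ _ _ Hv); apply Rmin_r.
  - apply (Rlt_le_trans _ _ _ Hu); apply Rmin_l.
  - apply (Rlt_le_trans _ _ _ Hv); apply Rmin_l.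
Qed.

Lemma two_cw f x y : continuity_2d_pt f x y -> cont_within (fun _ _ => True) f x y.
Proof.
  intros H eps He. destruct (H (mkposreal _ He)) as [d Hd].
  exists d; split. apply cond_pos. intros; apply Hd; auto.
Qed.

Lemma cw_two f x y : cont_within (fun _ _ => True) f x y -> continuity_2d_pt f x y.
Proof.
  intros H eps. destruct (H eps (cond_pos eps)) as [d [Hd H']].
  exists (mkposreal _ Hd); simpl; intros; apply H'; auto.
Qed.

Lemma cw_comp (D : R -> R -> Prop) (h : R -> R -> R) f g x y :
  cont_within D f x y -> cont_within D g x y -> continuity_2d_pt h (f x y) (g x y) ->
  cont_within D (fun a b => h (f a b) (g a b)) x y.
Proof.
  intros Hf Hg Hh eps He.
  destruct (Hh (mkposreal _ He)) as [d Hd].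
  destruct (Hf d (cond_pos d)) as [d1 [Hd1 H1]].
  destruct (Hg d (cond_pos d)) as [d2 [Hd2 H2]].
  exists (Rmin d1 d2); split. apply Rmin_pos; auto.
  intros x' y' HD Hx Hy. apply Hd.
  - apply H1; auto. apply (Rlt_le_trans _ _ _ Hx); apply Rmin_l. apply (Rlt_le_trans _ _ _ Hy); apply Rmin_l.
  - apply H2; auto. apply (Rlt_le_trans _ _ _ Hx); apply Rmin_r. apply (Rlt_le_trans _ _ _ Hy); apply Rmin_r.
Qed.

Lemma cw_const D c x y : cont_within D (fun _ _ => c) x y.
Proof. intros eps He; exists 1; split; [lra|]; intros; unfold Rminus; rewrite Rplus_opp_r, Rabs_R0; auto. Qed.

Lemma cw_id1 D x y : cont_within D (fun a _ => a) x y.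
Proof. intros eps He; exists eps; split; auto. Qed.

Lemma cw_id2 D x y : cont_within D (fun _ b => b) x y.
Proof. intros eps He; exists eps; split; auto. Qed.

Lemma cw_plus D f g x y : cont_within D f x y -> cont_within D g x y ->
  cont_within D (fun a b => f a b + g a b) x y.
Proof.
  intros Hf Hg. apply (cw_comp D (fun a b => a + b)); auto.
  apply continuity_2d_pt_plus; [apply continuity_2d_pt_id1|apply continuity_2d_pt_id2].
Qed.

Lemma cw_mult D f g x y : cont_within D f x y -> cont_within D g x y ->
  cont_within D (fun a b => f a b * g a b) x y.
Proof.
  intros Hf Hg. apply (cw_comp D (fun a b => a * b)); auto.
  apply continuity_2d_pt_mult; [apply continuity_2d_pt_id1|apply continuity_2d_pt_id2].
Qed.

Lemma cw_div D f g x y : cont_within D f x y -> cont_within D g x y -> g x y <> 0 ->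
  cont_within D (fun a b => f a b / g a b) x y.
Proof.
  intros Hf Hg Hn. apply (cw_comp D (fun a b => a / b)); auto.
  apply continuity_2d_pt_mult; [apply continuity_2d_pt_id1|].
  apply continuity_2d_pt_inv; [apply continuity_2d_pt_id2|auto].
Qed.

Lemma cw_ext D f g x y : (forall a b, f a b = g a b) -> cont_within D f x y -> cont_within D g x y.
Proof. intros E H eps He; destruct (H eps He) as [d [Hd H']]; exists d; split; auto; intros; rewrite <- !E; auto. Qed.

Lemma ct_comp (h : R -> R -> R) f g t :
  continuity_2d_pt h (f t) (g t) -> continuity_pt f t -> continuity_pt g t ->
  continuity_pt (fun s => h (f s) (g s)) t.
Proof.
  intros Hh Hf Hg eps He.
  destruct (Hh (mkposreal _ He)) as [d Hd].
  destruct (Hf d (cond_pos d)) as [d1 [Hd1 H1]].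
  destruct (Hg d (cond_pos d)) as [d2 [Hd2 H2]].
  exists (Rmin d1 d2); split. apply Rmin_pos; auto.
  intros s [Hs0 Hs]. simpl in *. unfold R_dist in *. apply Hd.
  - apply H1; split; [exact Hs0|]. apply (Rlt_le_trans _ _ _ Hs); apply Rmin_l.
  - apply H2; split; [exact Hs0|]. apply (Rlt_le_trans _ _ _ Hs); apply Rmin_r.
Qed.
Lemma between_abs a b c : Rmin a b <= c <= Rmax a b -> Rabs (c - a) <= Rabs (b - a).
Proof.
  unfold Rmin, Rmax; destruct (Rle_dec a b); intros [H1 H2];
  unfold Rabs; repeat destruct Rcase_abs; lra.
Qed.

Lemma deriv_cont_pt f x l : is_derive f x l -> continuity_pt f x.
Proof.
  intros H. apply continuity_pt_filterlim. exact (ex_derive_continuous f x (ex_intro _ l H)).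
Qed.

Lemma C1_diff f f1 f2 x y :
  locally_2d (fun u v => is_derive (fun t => f t v) u (f1 u v) /\ is_derive (fun t => f u t) v (f2 u v)) x y ->
  continuity_2d_pt f1 x y -> continuity_2d_pt f2 x y ->
  differentiable_pt_lim f x y (f1 x y) (f2 x y).
Proof.
  intros [d0 H0] H1 H2 eps.
  assert (He2 : 0 < eps/2) by (destruct eps; simpl; lra).
  destruct (H1 (mkposreal _ He2)) as [d1 Hd1].
  destruct (H2 (mkposreal _ He2)) as [d2 Hd2].
  assert (Hm : 0 < Rmin d0 (Rmin d1 d2)).
  { apply Rmin_pos; [apply cond_pos|apply Rmin_pos; apply cond_pos]. }
  exists (mkposreal _ Hm); simpl; intros u v Hu Hv.
  assert (Hu0 : Rabs (u-x) < d0) by (eapply Rlt_le_trans; [exact Hu| apply Rmin_l]).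
  assert (Hv0 : Rabs (v-y) < d0) by (eapply Rlt_le_trans; [exact Hv| apply Rmin_l]).
  assert (Hu1 : Rabs (u-x) < d1) by (eapply Rlt_le_trans; [exact Hu| eapply Rle_trans; [apply Rmin_r|apply Rmin_l]]).
  assert (Hv1 : Rabs (v-y) < d1) by (eapply Rlt_le_trans; [exact Hv| eapply Rle_trans; [apply Rmin_r|apply Rmin_l]]).
  assert (Hu2 : Rabs (u-x) < d2) by (eapply Rlt_le_trans; [exact Hu| eapply Rle_trans; [apply Rmin_r|apply Rmin_r]]).
  assert (Hv2 : Rabs (v-y) < d2) by (eapply Rlt_le_trans; [exact Hv| eapply Rle_trans; [apply Rmin_r|apply Rmin_r]]).
  destruct (MVT_gen (fun t => f t v) x u (fun t => f1 t v)) as [c1 [Hc1 E1]].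
  { intros t Ht. refine (proj1 (H0 t v _ _)); auto.
    eapply Rle_lt_trans; [apply (between_abs x u); lra| auto]. }
  { intros t Ht. apply (deriv_cont_pt _ _ (f1 t v)). refine (proj1 (H0 t v _ _)); auto.
    eapply Rle_lt_trans; [apply (between_abs x u); lra| auto]. }
  destruct (MVT_gen (fun t => f x t) y v (fun t => f2 x t)) as [c2 [Hc2 E2]].
  { intros t Ht. refine (proj2 (H0 x t _ _)). rewrite Rminus_eq_0, Rabs_R0. apply cond_pos.
    eapply Rle_lt_trans; [apply (between_abs y v); lra| auto]. }
  { intros t Ht. apply (deriv_cont_pt _ _ (f2 x t)). refine (proj2 (H0 x t _ _)). rewrite Rminus_eq_0, Rabs_R0. apply cond_pos.
    eapply Rle_lt_trans; [apply (between_abs y v); lra| auto]. }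
  apply between_abs in Hc1. apply between_abs in Hc2.
  assert (K1 : Rabs (f1 c1 v - f1 x y) < eps/2) by (apply Hd1; lra).
  assert (K2 : Rabs (f2 x c2 - f2 x y) < eps/2).
  { apply Hd2. rewrite Rminus_eq_0, Rabs_R0. apply cond_pos. lra. }
  replace (f u v - f x y - (f1 x y * (u - x) + f2 x y * (v - y))) with
    ((f1 c1 v - f1 x y) * (u - x) + (f2 x c2 - f2 x y) * (v - y)).
  2:{ replace (f u v - f x y) with ((f u v - f x v) + (f x v - f x y)) by ring. rewrite E1, E2. ring. }
  eapply Rle_trans. apply Rabs_triang. rewrite !Rabs_mult.
  assert (Rabs (u-x) <= Rmax (Rabs (u - x)) (Rabs (v - y))) by apply Rmax_l.
  assert (Rabs (v-y) <= Rmax (Rabs (u - x)) (Rabs (v - y))) by apply Rmax_r.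
  assert (0 <= Rabs (u-x)) by apply Rabs_pos. assert (0 <= Rabs (v-y)) by apply Rabs_pos.
  assert (0 <= Rabs (f1 c1 v - f1 x y)) by apply Rabs_pos. assert (0 <= Rabs (f2 x c2 - f2 x y)) by apply Rabs_pos.
  nra.
Qed.

Lemma diff_cont f x y lx ly : differentiable_pt_lim f x y lx ly -> continuity_2d_pt f x y.
Proof. intros H; apply differentiable_continuity_pt; exists lx, ly; exact H. Qed.

Lemma ray_derive f lx ly (p q c s t : R) :
  differentiable_pt_lim f (p + t * c) (q + t * s) lx ly ->
  is_derive (fun z => f (p + z * c) (q + z * s)) t (lx * c + ly * s).
Proof.
  intros H. apply is_derive_Reals.
  apply (derivable_pt_lim_comp_2d f (fun z => p + z * c) (fun z => q + z * s)); auto.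
  - apply is_derive_Reals. auto_derive; auto; ring.
  - apply is_derive_Reals. auto_derive; auto; ring.
Qed.
Lemma cover (D : R -> R -> Prop) (Q : R -> R -> R -> Prop) :
  (forall x y, D x y -> -1 <= x <= 1 /\ -1 <= y <= 1) ->
  (forall x y, ~ D x y -> exists d, 0 < d /\ forall x' y', Rabs (x'-x) < d -> Rabs (y'-y) < d -> ~ D x' y') ->
  (forall u v, D u v -> exists d, 0 < d /\ Q u v d) ->
  exists e, 0 < e /\ forall x y, D x y -> exists u v d, D u v /\ Q u v d /\ e <= d /\
     Rabs (x-u) < d /\ Rabs (y-v) < d.
Proof.
  intros Hb Hc HQ.
  assert (Ex : forall u v, exists d : posreal, (D u v -> Q u v d) /\
     (~ D u v -> forall x' y', Rabs (x'-u) < d -> Rabs (y'-v) < d -> ~ D x' y')).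
  { intros u v. destruct (classic (D u v)) as [H|H].
    - destruct (HQ u v H) as [d [Hd HQd]]. exists (mkposreal _ Hd); split; simpl; auto; tauto.
    - destruct (Hc u v H) as [d [Hd HQd]]. exists (mkposreal _ Hd); split; simpl; auto; tauto. }
  set (delta := fun u v => proj1_sig (constructive_indefinite_description _ (Ex u v))).
  destruct (compactness_value_2d (-1) 1 (-1) 1 delta) as [e He].
  exists e; split; [apply cond_pos|].
  intros x y Hxy. destruct (Hb x y Hxy) as [Bx By].
  specialize (He x y Bx By). apply NNPP in He.
  destruct He as [u [v [Bu [Bv [H1 [H2 H3]]]]]].
  pose proof (proj2_sig (constructive_indefinite_description _ (Ex u v))) as [P1 P2].
  fold (delta u v) in P1, P2.
  destruct (classic (D u v)) as [Duv|nD].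
  - exists u, v, (delta u v). split; [exact Duv|]. split; [apply P1; exact Duv|]. split; [exact H3|].
    split; assumption.
  - exfalso. apply (P2 nD x y); auto.
Qed.

Lemma evt2 (D : R -> R -> Prop) (f : R -> R -> R) :
  (exists x y, D x y) ->
  (forall x y, D x y -> -1 <= x <= 1 /\ -1 <= y <= 1) ->
  (forall x y, ~ D x y -> exists d, 0 < d /\ forall x' y', Rabs (x'-x) < d -> Rabs (y'-y) < d -> ~ D x' y') ->
  (forall x y, D x y -> cont_within D f x y) ->
  exists x y, D x y /\ forall x' y', D x' y' -> f x' y' <= f x y.
Proof.
  intros [x0 [y0 H0]] Hb Hc Hf.
  destruct (cover D (fun u v d => (forall x y, D x y -> Rabs (x-u) < d -> Rabs (y-v) < d -> f x y < f u v + 1)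
     /\ d <= / (1 + Rabs (f u v))) Hb Hc) as [e [He Hcov]].
  { intros u v Duv. destruct (Hf u v Duv 1 Rlt_0_1) as [d1 [Hd1 Hd]].
    assert (0 < / (1 + Rabs (f u v))) by (apply Rinv_0_lt_compat; pose proof (Rabs_pos (f u v)); lra).
    exists (Rmin d1 (/ (1 + Rabs (f u v)))); split; [apply Rmin_pos; auto|split; [|apply Rmin_r]].
    intros x y Dxy Hx Hy.
    assert (Hh : Rabs (f x y - f u v) < 1).
    { apply Hd; auto; eapply Rlt_le_trans; eauto; apply Rmin_l. }
    apply Rabs_def2 in Hh. lra. }
  set (E := fun z => exists x y, D x y /\ z = f x y).
  assert (bE : bound E).
  { exists (/ e). intros z [x [y [Dxy ->]]].
    destruct (Hcov x y Dxy) as [u [v [d [Duv [[Q1 Q2] [Hed [Hx Hy]]]]]]].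
    assert (f x y < f u v + 1) by (apply Q1; auto; rewrite Rabs_minus_sym; auto).
    assert (e <= / (1 + Rabs (f u v))) by lra.
    assert (Hp : 0 < 1 + Rabs (f u v)) by (pose proof (Rabs_pos (f u v)); lra).
    assert (1 + Rabs (f u v) <= / e).
    { apply (Rmult_le_reg_l e); auto. rewrite Rinv_r by lra.
      apply (Rmult_le_reg_r (/ (1 + Rabs (f u v)))). apply Rinv_0_lt_compat; auto.
      rewrite Rmult_1_l, Rmult_assoc, Rinv_r by lra. lra. }
    pose proof (Rle_abs (f u v)). lra. }
  destruct (completeness E bE) as [M [HM1 HM2]].
  { exists (f x0 y0), x0, y0; auto. }
  destruct (classic (exists x y, D x y /\ f x y = M)) as [[x [y [Dxy Exy]]]|Hno].
  { exists x, y; split; auto. intros x' y' D'. rewrite Exy. apply HM1. exists x', y'; auto. }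
  exfalso.
  assert (Hlt : forall x y, D x y -> f x y < M).
  { intros x y Dxy. assert (f x y <= M) by (apply HM1; exists x, y; auto).
    destruct (Rle_lt_or_eq_dec _ _ H); auto. exfalso; apply Hno; exists x, y; auto. }
  destruct (cover D (fun u v d => (forall x y, D x y -> Rabs (x-u) < d -> Rabs (y-v) < d -> f x y < (M + f u v)/2)
     /\ d <= M - f u v) Hb Hc) as [e2 [He2 Hcov2]].
  { intros u v Duv. assert (Hp : 0 < (M - f u v)/2) by (specialize (Hlt u v Duv); lra).
    destruct (Hf u v Duv _ Hp) as [d1 [Hd1 Hd]].
    assert (0 < M - f u v) by lra.
    exists (Rmin d1 (M - f u v)); split; [apply Rmin_pos; auto|split; [|apply Rmin_r]].
    intros x y Dxy Hx Hy.
    assert (Hh : Rabs (f x y - f u v) < (M - f u v)/2).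
    { apply Hd; auto; eapply Rlt_le_trans; eauto; apply Rmin_l. }
    apply Rabs_def2 in Hh. lra. }
  assert (M <= M - e2/2).
  { apply HM2. intros z [x [y [Dxy ->]]].
    destruct (Hcov2 x y Dxy) as [u [v [d [Duv [[Q1 Q2] [Hed [Hx Hy]]]]]]].
    assert (f x y < (M + f u v)/2) by (apply Q1; auto; rewrite Rabs_minus_sym; auto).
    lra. }
  lra.
Qed.
Lemma locally_R (P : R -> Prop) x d : 0 < d -> (forall y, Rabs (y - x) < d -> P y) -> locally x P.
Proof. intros Hd H. exists (mkposreal d Hd). intros y Hy. apply H. exact Hy. Qed.

Definition holo (f g f1 f2 : R -> R -> R) := forall x y, in_B x y ->
  is_derive (fun t => f t y) x (f1 x y) /\ is_derive (fun t => f x t) y (f2 x y) /\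
  is_derive (fun t => g t y) x (- f2 x y) /\ is_derive (fun t => g x t) y (f1 x y) /\
  continuity_2d_pt f1 x y /\ continuity_2d_pt f2 x y.

Lemma locB x y : in_B x y -> locally_2d (fun u v => in_B u v) x y.
Proof.
  intros H. exists (mkposreal _ (rB_pos x y H)); simpl; intros u v Hu Hv. apply (box_B x y); auto.
Qed.

Lemma locally_2d_impl_B (P : R -> R -> Prop) x y : in_B x y -> (forall u v, in_B u v -> P u v) -> locally_2d P x y.
Proof.
  intros H HP. destruct (locB x y H) as [d Hd]. exists d; intros; apply HP, Hd; auto.
Qed.

Lemma holo_diff_f f g f1 f2 x y : holo f g f1 f2 -> in_B x y -> differentiable_pt_lim f x y (f1 x y) (f2 x y).
Proof.
  intros H Hxy. apply C1_diff.
  - apply locally_2d_impl_B; auto. intros u v Huv; destruct (H u v Huv) as [? [? _]]; auto.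
  - apply (H x y Hxy).
  - apply (H x y Hxy).
Qed.

Lemma holo_diff_g f g f1 f2 x y : holo f g f1 f2 -> in_B x y -> differentiable_pt_lim g x y (- f2 x y) (f1 x y).
Proof.
  intros H Hxy. apply (C1_diff g (fun u v => - f2 u v) f1).
  - apply locally_2d_impl_B; auto. intros u v Huv; destruct (H u v Huv) as [? [? [? [? _]]]]; auto.
  - apply continuity_2d_pt_opp, (H x y Hxy).
  - apply (H x y Hxy).
Qed.

Lemma ray_in_B px py s th : in_B px py -> Rabs s < rB px py -> in_B (px + s * cos th) (py + s * sin th).
Proof.
  intros H Hs. apply (box_B px py); auto.
  - replace (px + s * cos th - px) with (s * cos th) by ring. rewrite Rabs_mult.
    pose proof (COS_bound th). assert (Rabs (cos th) <= 1) by (apply Rabs_le; lra).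
    pose proof (Rabs_pos s). nra.
  - replace (py + s * sin th - py) with (s * sin th) by ring. rewrite Rabs_mult.
    pose proof (SIN_bound th). assert (Rabs (sin th) <= 1) by (apply Rabs_le; lra).
    pose proof (Rabs_pos s). nra.
Qed.

Lemma ct2_lin px (s0 t0 : R) : continuity_2d_pt (fun u v => px + u * cos v) s0 t0.
Proof.
  apply continuity_2d_pt_plus. apply continuity_2d_pt_const.
  apply continuity_2d_pt_mult. apply continuity_2d_pt_id1.
  apply (continuity_1d_2d_pt_comp cos (fun _ v => v)). apply continuity_cos. apply continuity_2d_pt_id2.
Qed.

Lemma ct2_lin' py (s0 t0 : R) : continuity_2d_pt (fun u v => py + u * sin v) s0 t0.
Proof.
  apply continuity_2d_pt_plus. apply continuity_2d_pt_const.
  apply continuity_2d_pt_mult. apply continuity_2d_pt_id1.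
  apply (continuity_1d_2d_pt_comp sin (fun _ v => v)). apply continuity_sin. apply continuity_2d_pt_id2.
Qed.

Lemma ct2_comp (h f g : R -> R -> R) x y : continuity_2d_pt h (f x y) (g x y) ->
  continuity_2d_pt f x y -> continuity_2d_pt g x y -> continuity_2d_pt (fun a b => h (f a b) (g a b)) x y.
Proof.
  intros H1 H2 H3. apply cw_two. apply cw_comp; auto; apply two_cw; auto.
Qed.

Lemma ct_circ (h : R -> R -> R) px py s th : continuity_2d_pt h (px + s * cos th) (py + s * sin th) ->
  continuous (fun t => h (px + s * cos t) (py + s * sin t)) th.
Proof.
  intros H. apply (proj1 (continuity_pt_filterlim _ _)).
  apply (ct_comp h (fun t => px + s * cos t) (fun t => py + s * sin t)); auto.
  - apply continuity_pt_plus. apply continuity_pt_const; intros ? ?; auto.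
    apply continuity_pt_scal. apply continuity_cos.
  - apply continuity_pt_plus. apply continuity_pt_const; intros ? ?; auto.
    apply continuity_pt_scal. apply continuity_sin.
Qed.

Lemma circ_derive h lx ly (p q s t : R) :
  differentiable_pt_lim h (p + s * cos t) (q + s * sin t) lx ly ->
  is_derive (fun z => h (p + s * cos z) (q + s * sin z)) t (lx * (- s * sin t) + ly * (s * cos t)).
Proof.
  intros H. apply is_derive_Reals.
  apply (derivable_pt_lim_comp_2d h (fun z => p + s * cos z) (fun z => q + s * sin z)); auto.
  - apply is_derive_Reals. auto_derive; auto; ring.
  - apply is_derive_Reals. auto_derive; auto; ring.
Qed.

Section MV.
Variables (f g f1 f2 : R -> R -> R) (px py : R).
Hypothesis (Hh : holo f g f1 f2) (Hp : in_B px py).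

Let d := rB px py.
Let F s th := f (px + s * cos th) (py + s * sin th).
Let G s th := g (px + s * cos th) (py + s * sin th).
Let E s th := f1 (px + s * cos th) (py + s * sin th) * cos th + f2 (px + s * cos th) (py + s * sin th) * sin th.

Lemma dpos : 0 < d. Proof. apply rB_pos; auto. Qed.

Lemma F_der s th : Rabs s < d -> is_derive (fun z => F z th) s (E s th).
Proof.
  intros Hs. unfold F, E. apply ray_derive. apply holo_diff_f with (g := g); auto.
  apply ray_in_B; auto.
Qed.

Lemma E_cont s th : Rabs s < d -> continuity_2d_pt E s th.
Proof.
  intros Hs. unfold E.
  assert (HB : in_B (px + s * cos th) (py + s * sin th)) by (apply ray_in_B; auto).
  apply continuity_2d_pt_plus; apply continuity_2d_pt_mult.
  - apply (ct2_comp f1); [apply (Hh _ _ HB)|apply ct2_lin|apply ct2_lin'].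
  - apply (continuity_1d_2d_pt_comp cos (fun _ v => v)). apply continuity_cos. apply continuity_2d_pt_id2.
  - apply (ct2_comp f2); [apply (Hh _ _ HB)|apply ct2_lin|apply ct2_lin'].
  - apply (continuity_1d_2d_pt_comp sin (fun _ v => v)). apply continuity_sin. apply continuity_2d_pt_id2.
Qed.

Lemma F_cont s th : Rabs s < d -> continuous (F s) th.
Proof.
  intros Hs. unfold F. apply ct_circ.
  assert (HB : in_B (px + s * cos th) (py + s * sin th)) by (apply ray_in_B; auto).
  apply (diff_cont _ _ _ _ _ (holo_diff_f f g f1 f2 _ _ Hh HB)).
Qed.

Lemma M_der s : Rabs s < d ->
  is_derive (fun z => RInt (F z) 0 (2*PI)) s (RInt (E s) 0 (2*PI)).
Proof.
  intros Hs.
  assert (Hq : 0 < d - Rabs s) by lra.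
  assert (Hloc : forall s', Rabs (s' - s) < d - Rabs s -> Rabs s' < d).
  { intros s' H'. replace s' with ((s' - s) + s) by ring. eapply Rle_lt_trans. apply Rabs_triang. lra. }
  assert (HE : RInt (E s) 0 (2*PI) = RInt (fun t => Derive (fun u => F u t) s) 0 (2*PI)).
  { apply RInt_ext. intros t _. symmetry. apply is_derive_unique. apply F_der; auto. }
  rewrite HE.
  apply (is_derive_RInt_param F 0 (2*PI) s).
  - apply (locally_R _ s (d - Rabs s) Hq). intros s' H' t _. exists (E s' t). apply F_der; auto.
  - intros t _. apply continuity_2d_pt_ext_loc with (f := E).
    + exists (mkposreal _ Hq); simpl; intros u v Hu Hv. symmetry. apply is_derive_unique. apply F_der. auto.
    + apply E_cont; auto.
  - apply (locally_R _ s (d - Rabs s) Hq). intros s' H'. apply (@ex_RInt_continuous R_CompleteNormedModule). intros z _.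
    apply F_cont; auto.
Qed.

Lemma E_contt s t : Rabs s < d -> continuous (E s) t.
Proof.
  intros Hs. apply (proj1 (continuity_pt_filterlim _ _)).
  apply (ct_comp E (fun _ => s) (fun t => t)). apply E_cont; auto.
  apply continuity_pt_const; intros ? ?; auto. apply continuity_pt_id.
Qed.

Lemma E_int s : 0 < s < d -> RInt (E s) 0 (2*PI) = 0.
Proof.
  intros Hs. assert (Ha : Rabs s < d) by (rewrite Rabs_pos_eq; lra).
  assert (Hi : is_RInt (E s) 0 (2*PI) (minus ((/ s) * G s (2*PI)) ((/ s) * G s 0))).
  { apply (is_RInt_derive (fun t => / s * G s t)).
    - intros t _. unfold G.
      assert (HB : in_B (px + s * cos t) (py + s * sin t)) by (apply ray_in_B; auto).
      pose proof (circ_derive _ _ _ px py s t (holo_diff_g f g f1 f2 _ _ Hh HB)) as Hd.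
      apply (is_derive_scal _ _ (/ s)) in Hd.
      replace (E s t) with (/ s * (- f2 (px + s * cos t) (py + s * sin t) * (- s * sin t) +
         f1 (px + s * cos t) (py + s * sin t) * (s * cos t))) by (unfold E; field; lra).
      exact Hd.
    - intros t _. apply E_contt; auto. }
  rewrite (is_RInt_unique _ _ _ _ Hi).
  unfold G. rewrite cos_2PI, sin_2PI, cos_0, sin_0. unfold minus, plus, opp; simpl. ring.
Qed.

Lemma M_const : RInt (F (d/2)) 0 (2*PI) = 2 * PI * f px py.
Proof.
  assert (Hd : 0 < d) by apply dpos.
  set (M := fun z => RInt (F z) 0 (2*PI)).
  set (df := fun z => if Rlt_dec 0 z then RInt (E z) 0 (2*PI) else 0).
  destruct (MVT_gen M 0 (d/2) df) as [c [Hc Ec]].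
  - intros x Hx. rewrite Rmin_left, Rmax_right in Hx by lra.
    unfold df; destruct (Rlt_dec 0 x); [|lra]. apply M_der. rewrite Rabs_pos_eq; lra.
  - intros x Hx. rewrite Rmin_left, Rmax_right in Hx by lra.
    apply (deriv_cont_pt _ _ (RInt (E x) 0 (2*PI))). apply M_der. rewrite Rabs_pos_eq; lra.
  - rewrite Rmin_left, Rmax_right in Hc by lra.
    assert (df c = 0).
    { unfold df; destruct (Rlt_dec 0 c); auto. apply E_int; lra. }
    rewrite H, Rmult_0_l in Ec. unfold M in Ec.
    assert (M0 : RInt (F 0) 0 (2 * PI) = 2 * PI * f px py).
    { rewrite (RInt_ext _ (fun _ => f px py)).
      - rewrite RInt_const. unfold scal; simpl; unfold mult; simpl. ring.
      - intros x _. unfold F. rewrite !Rmult_0_l, !Rplus_0_r. reflexivity. }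
    lra.
Qed.

End MV.

Lemma mean_value f g f1 f2 px py : holo f g f1 f2 -> in_B px py ->
  RInt (fun th => f (px + (rB px py / 2) * cos th) (py + (rB px py / 2) * sin th)) 0 (2*PI) = 2 * PI * f px py.
Proof. intros H1 H2. exact (M_const f g f1 f2 px py H1 H2). Qed.
Lemma ct2_sq x y : continuity_2d_pt (fun a b => a^2 + b^2) x y.
Proof.
  apply continuity_2d_pt_ext with (f := fun a b => a * a + b * b). intros; ring.
  apply continuity_2d_pt_plus; apply continuity_2d_pt_mult;
   first [apply continuity_2d_pt_id1 | apply continuity_2d_pt_id2].
Qed.

Lemma closed_level (P : R -> Prop) x y :
  (forall z, ~ P z -> exists e, 0 < e /\ forall w, Rabs (w - z) < e -> ~ P w) ->
  ~ P (x^2+y^2) -> exists d, 0 < d /\ forall x' y', Rabs (x'-x) < d -> Rabs (y'-y) < d -> ~ P (x'^2+y'^2).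
Proof.
  intros HP Hn. destruct (HP _ Hn) as [e [He H]].
  destruct (ct2_sq x y (mkposreal _ He)) as [d Hd].
  exists d; split. apply cond_pos. intros; apply H, Hd; auto.
Qed.

Lemma bounds_cl x y : x^2 + y^2 <= 1 -> -1 <= x <= 1 /\ -1 <= y <= 1.
Proof. intros; split; split; nra. Qed.

Lemma RInt_q px py r : is_RInt (fun t => (px + r * cos t)^2 + (py + r * sin t)^2) 0 (2*PI)
   (2 * PI * (px^2 + py^2 + r^2)).
Proof.
  replace (2 * PI * (px^2 + py^2 + r^2)) with
    (minus ((px^2+py^2+r^2) * (2*PI) + 2 * r * (px * sin (2*PI) - py * cos (2*PI)))
           ((px^2+py^2+r^2) * 0 + 2 * r * (px * sin 0 - py * cos 0))).
  2:{ rewrite cos_2PI, sin_2PI, cos_0, sin_0. unfold minus, plus, opp; simpl. ring. }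
  apply (is_RInt_derive (fun t => (px^2+py^2+r^2) * t + 2 * r * (px * sin t - py * cos t))).
  - intros t _. auto_derive; auto. pose proof (sin2_cos2 t). unfold Rsqr in H. nra.
  - intros t _. apply (ct_circ (fun a b => a^2 + b^2)). apply ct2_sq.
Qed.

Lemma max_principle (phi psi p1 p2 : R -> R -> R) (c : R) :
  holo phi psi p1 p2 ->
  (forall x y, in_closB x y -> cont_within in_closB phi x y) ->
  (forall x y, in_bdB x y -> phi x y < c) ->
  forall x y, in_B x y -> phi x y < c.
Proof.
  intros Hh Hc Hbd.
  destruct (evt2 in_bdB phi) as [qx [qy [Hq Hqmax]]].
  - exists 1, 0. unfold in_bdB; ring.
  - intros x y H; apply bounds_cl; unfold in_bdB in H; lra.
  - intros x y H. apply (closed_level (fun z => z = 1)); auto.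
    intros z Hz. exists (Rabs (z - 1)); split. apply Rabs_pos_lt; lra.
    intros w Hw Hw1. subst. rewrite Rabs_minus_sym in Hw. lra.
  - intros x y H. apply (cw_sub _ in_closB). unfold in_bdB, in_closB; intros; lra.
    apply Hc. unfold in_closB, in_bdB in *; lra.
  - set (m := phi qx qy).
    assert (Hm : m < c) by (apply Hbd; auto).
    set (eps := (c - m)/2).
    assert (He : 0 < eps) by (unfold eps; lra).
    set (psi' := fun a b => phi a b + eps * (a^2 + b^2)).
    destruct (evt2 in_closB psi') as [zx [zy [Hz Hzmax]]].
    + exists 0, 0. unfold in_closB; lra.
    + intros x y H; apply bounds_cl; auto.
    + intros x y H. apply (closed_level (fun z => z <= 1)); auto.
      intros z Hz. exists (z - 1); split. lra.
      intros w Hw Hw1. apply Rabs_def2 in Hw. lra.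
    + intros x y H. unfold psi'. apply cw_plus; auto. apply cw_mult. apply cw_const.
      apply (cw_comp _ (fun a b => a^2+b^2)). apply cw_id1. apply cw_id2. apply ct2_sq.
    + assert (Hzb : ~ in_B zx zy).
      { intros HzB.
        set (r := rB zx zy / 2).
        assert (Hr : 0 < r) by (unfold r; pose proof (rB_pos zx zy HzB); lra).
        set (ph := fun t => phi (zx + r * cos t) (zy + r * sin t)).
        assert (Hin : forall t, in_B (zx + r * cos t) (zy + r * sin t)).
        { intros t. apply ray_in_B; auto. pose proof (rB_pos zx zy HzB). unfold r. rewrite Rabs_pos_eq by lra. lra. }
        assert (Eph : ex_RInt ph 0 (2*PI)).
        { apply (@ex_RInt_continuous R_CompleteNormedModule). intros t _. unfold ph. apply ct_circ.
          apply (diff_cont _ _ _ _ _ (holo_diff_f phi psi p1 p2 _ _ Hh (Hin t))). }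
        assert (I1 : is_RInt ph 0 (2*PI) (2 * PI * phi zx zy)).
        { rewrite <- (mean_value phi psi p1 p2 zx zy Hh HzB). apply (RInt_correct ph); auto. }
        pose proof (is_RInt_plus _ _ _ _ _ _ I1 (is_RInt_scal _ _ _ eps _ (RInt_q zx zy r))) as I3.
        match type of I3 with is_RInt ?h _ _ ?v =>
          assert (Hle : RInt h 0 (2*PI) <= RInt (fun _ => psi' zx zy) 0 (2*PI));
          [|assert (U3 : RInt h 0 (2*PI) = v) by (apply (@is_RInt_unique R_CompleteNormedModule); exact I3)] end.
        { apply RInt_le.
          - pose proof PI_RGT_0; lra.
          - eexists; exact I3.
          - apply ex_RInt_const.
          - intros t _. apply Hzmax. unfold in_closB. pose proof (Hin t); unfold in_B in *; lra. }
        match type of U3 with _ = ?v => assert (Hle2 : v <= RInt (fun _ => psi' zx zy) 0 (2*PI))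
          by (eapply Rle_trans; [right; symmetry; exact U3 | exact Hle]) end.
        clear Hle; rename Hle2 into Hle. rewrite RInt_const in Hle.
        unfold plus, scal in Hle; simpl in Hle; unfold mult in Hle; simpl in Hle.
        unfold psi' in Hle. pose proof PI_RGT_0. assert (0 < eps * PI * (r*r)) by (apply Rmult_lt_0_compat; [apply Rmult_lt_0_compat|]; nra). simpl in Hle. nra. }
      intros x y HB.
      assert (Hzbd : zx^2 + zy^2 = 1) by (unfold in_closB, in_B in *; lra).
      assert (psi' x y <= psi' zx zy) by (apply Hzmax; unfold in_closB, in_B in *; lra).
      assert (phi zx zy <= m) by (apply Hqmax; auto).
      unfold psi' in H. rewrite Hzbd in H. assert (0 <= x^2+y^2) by nra.
      assert (0 <= eps * (x^2+y^2)) by nra. unfold eps in *. lra.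
Qed.
Lemma dadd (f g : R -> R) x df dg : is_derive f x df -> is_derive g x dg -> is_derive (fun t => f t + g t) x (df + dg).
Proof. intros; apply (is_derive_plus f g); auto. Qed.
Lemma dsub (f g : R -> R) x df dg : is_derive f x df -> is_derive g x dg -> is_derive (fun t => f t - g t) x (df - dg).
Proof. intros; apply (is_derive_minus f g); auto. Qed.
Lemma dmul (f g : R -> R) x df dg : is_derive f x df -> is_derive g x dg -> is_derive (fun t => f t * g t) x (df * g x + f x * dg).
Proof. intros H1 H2. apply (is_derive_ext _ _ _ _ (fun _ => eq_refl)). pose proof (is_derive_mult f g x df dg H1 H2) as H.
  simpl in H. replace (df * g x + f x * dg) with (plus (mult df (g x)) (mult (f x) dg)). apply H. intros; apply Rmult_comm. reflexivity. Qed.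
Lemma dscal (f : R -> R) x k df : is_derive f x df -> is_derive (fun t => k * f t) x (k * df).
Proof. intros; apply is_derive_scal; auto. Qed.
Lemma ddiv (f g : R -> R) x df dg l : is_derive f x df -> is_derive g x dg -> g x <> 0 ->
  l = (df * g x - f x * dg) / (g x * g x) -> is_derive (fun t => f t / g t) x l.
Proof. intros H1 H2 H3 ->. replace (g x * g x) with (g x ^ 2) by ring. apply is_derive_div; auto. Qed.
Lemma dval (f : R -> R) (x l l' : R) : is_derive f x l -> @eq R l l' -> is_derive f x l'.
Proof. intros H ->; auto. Qed.

Ltac ct := repeat first [apply continuity_2d_pt_plus | apply continuity_2d_pt_minus | apply continuity_2d_pt_mult
  | apply continuity_2d_pt_const | apply continuity_2d_pt_opp | assumption].

Section Quot.
Variables (A B X Y A1 A2 X1 X2 : R -> R -> R).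
Hypotheses (HA : holo A B A1 A2) (HX : holo X Y X1 X2)
  (HN : forall x y, in_B x y -> A x y * A x y + B x y * B x y <> 0).

Definition qN x y := A x y * A x y + B x y * B x y.
Definition qphi x y := (X x y * A x y + Y x y * B x y) / (A x y * A x y + B x y * B x y).
Definition qpsi x y := (Y x y * A x y - X x y * B x y) / (A x y * A x y + B x y * B x y).
Definition qphi1 x y := ((X1 x y * A x y + X x y * A1 x y + ((- X2 x y) * B x y + Y x y * (- A2 x y))) * qN x y
   - (X x y * A x y + Y x y * B x y) * ((A1 x y * A x y + A x y * A1 x y) + ((- A2 x y) * B x y + B x y * (- A2 x y))))
   / (qN x y * qN x y).
Definition qphi2 x y := ((X2 x y * A x y + X x y * A2 x y + (X1 x y * B x y + Y x y * A1 x y)) * qN x y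
   - (X x y * A x y + Y x y * B x y) * ((A2 x y * A x y + A x y * A2 x y) + (A1 x y * B x y + B x y * A1 x y)))
   / (qN x y * qN x y).

Lemma quot_holo : holo qphi qpsi qphi1 qphi2.
Proof.
  intros x y Hxy.
  destruct (HA x y Hxy) as [Ax [Ay [Bx [By [CA1 CA2]]]]].
  destruct (HX x y Hxy) as [Xx [Xy [Yx [Yy [CX1 CX2]]]]].
  pose proof (HN x y Hxy) as Hn.
  assert (CA : continuity_2d_pt A x y) by (apply (diff_cont _ _ _ _ _ (holo_diff_f A B A1 A2 x y HA Hxy))).
  assert (CB : continuity_2d_pt B x y) by (apply (diff_cont _ _ _ _ _ (holo_diff_g A B A1 A2 x y HA Hxy))).
  assert (CX : continuity_2d_pt X x y) by (apply (diff_cont _ _ _ _ _ (holo_diff_f X Y X1 X2 x y HX Hxy))).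
  assert (CY : continuity_2d_pt Y x y) by (apply (diff_cont _ _ _ _ _ (holo_diff_g X Y X1 X2 x y HX Hxy))).
  unfold qphi, qpsi, qphi1, qphi2, qN.
  split; [|split; [|split; [|split; [|split]]]].
  - pose proof (dadd _ _ _ _ _ (dmul _ _ _ _ _ Xx Ax) (dmul _ _ _ _ _ Yx Bx)) as Hf.
    pose proof (dadd _ _ _ _ _ (dmul _ _ _ _ _ Ax Ax) (dmul _ _ _ _ _ Bx Bx)) as Hg.
    refine (ddiv _ _ _ _ _ _ Hf Hg Hn _). reflexivity.
  - pose proof (dadd _ _ _ _ _ (dmul _ _ _ _ _ Xy Ay) (dmul _ _ _ _ _ Yy By)) as Hf.
    pose proof (dadd _ _ _ _ _ (dmul _ _ _ _ _ Ay Ay) (dmul _ _ _ _ _ By By)) as Hg.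
    refine (ddiv _ _ _ _ _ _ Hf Hg Hn _). reflexivity.
  - pose proof (dsub _ _ _ _ _ (dmul _ _ _ _ _ Yx Ax) (dmul _ _ _ _ _ Xx Bx)) as Hf.
    pose proof (dadd _ _ _ _ _ (dmul _ _ _ _ _ Ax Ax) (dmul _ _ _ _ _ Bx Bx)) as Hg.
    refine (ddiv _ _ _ _ _ _ Hf Hg Hn _). field; auto.
  - pose proof (dsub _ _ _ _ _ (dmul _ _ _ _ _ Yy Ay) (dmul _ _ _ _ _ Xy By)) as Hf.
    pose proof (dadd _ _ _ _ _ (dmul _ _ _ _ _ Ay Ay) (dmul _ _ _ _ _ By By)) as Hg.
    refine (ddiv _ _ _ _ _ _ Hf Hg Hn _). field; auto.
  - unfold Rdiv. apply continuity_2d_pt_mult. ct.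
    apply continuity_2d_pt_inv. ct. apply Rmult_integral_contrapositive; auto.
  - unfold Rdiv. apply continuity_2d_pt_mult. ct.
    apply continuity_2d_pt_inv. ct. apply Rmult_integral_contrapositive; auto.
Qed.
End Quot.
Lemma schwarz_B (f f1 f2 f12 f21 : R -> R -> R) :
  (forall x y, in_B x y -> is_derive (fun t => f t y) x (f1 x y) /\ is_derive (fun t => f x t) y (f2 x y) /\
     is_derive (fun t => f1 x t) y (f12 x y) /\ is_derive (fun t => f2 t y) x (f21 x y) /\
     continuity_2d_pt f12 x y /\ continuity_2d_pt f21 x y) ->
  forall x y, in_B x y -> f12 x y = f21 x y.
Proof.
  intros H x y Hxy.
  assert (L1 : forall u v, in_B u v -> locally u (fun z => Derive (fun t => f z t) v = f2 z v)).
  { intros u v Huv. apply (locally_R _ u (rB u v)). apply rB_pos; auto.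
    intros z Hz. apply is_derive_unique. apply (H z v). apply (box_B u v); auto.
    rewrite Rminus_eq_0, Rabs_R0; apply rB_pos; auto. }
  assert (L2 : forall u v, in_B u v -> locally v (fun z => Derive (fun t => f t z) u = f1 u z)).
  { intros u v Huv. apply (locally_R _ v (rB u v)). apply rB_pos; auto.
    intros z Hz. apply is_derive_unique. apply (H u z). apply (box_B u v); auto.
    rewrite Rminus_eq_0, Rabs_R0; apply rB_pos; auto. }
  destruct (H x y Hxy) as [_ [_ [K3 [K4 _]]]].
  assert (S1 : Derive (fun z => Derive (fun t => f z t) y) x = f21 x y).
  { rewrite <- (is_derive_unique _ _ _ K4). apply Derive_ext_loc. exact (L1 x y Hxy). }
  assert (S2 : Derive (fun z => Derive (fun t => f t z) x) y = f12 x y).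
  { rewrite <- (is_derive_unique _ _ _ K3). apply Derive_ext_loc. exact (L2 x y Hxy). }
  rewrite <- S1, <- S2. symmetry. apply Schwarz.
  - apply locally_2d_impl_B; auto. intros u v Huv. destruct (H u v Huv) as [D1 [D2 [D3 [D4 _]]]].
    split; [eexists; eauto|split; [eexists; eauto|split]].
    + exists (f21 u v). eapply is_derive_ext_loc; [|exact D4].
      generalize (L1 u v Huv). apply filter_imp. intros; symmetry; auto.
    + exists (f12 u v). eapply is_derive_ext_loc; [|exact D3].
      generalize (L2 u v Huv). apply filter_imp. intros; symmetry; auto.
  - apply continuity_2d_pt_ext_loc with (f := f21).
    + apply locally_2d_impl_B; auto. intros u v Huv.
      transitivity (Derive (fun z => f2 z v) u). symmetry; apply is_derive_unique, (H u v Huv).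
      symmetry; apply Derive_ext_loc, L1; auto.
    + apply (H x y Hxy).
  - apply continuity_2d_pt_ext_loc with (f := f12).
    + apply locally_2d_impl_B; auto. intros u v Huv.
      transitivity (Derive (fun z => f1 u z) v). symmetry; apply is_derive_unique, (H u v Huv).
      symmetry; apply Derive_ext_loc, L2; auto.
    + apply (H x y Hxy).
Qed.

Lemma lin_holo (ux uy vx vy uxx uxy uyx uyy vxx vxy vyx vyy : R -> R -> R) (k1 k2 k3 k4 : R) :
  (forall x y, in_B x y ->
    is_derive (fun t => ux t y) x (uxx x y) /\ is_derive (fun t => ux x t) y (uxy x y) /\
    is_derive (fun t => uy t y) x (uyx x y) /\ is_derive (fun t => uy x t) y (uyy x y) /\
    is_derive (fun t => vx t y) x (vxx x y) /\ is_derive (fun t => vx x t) y (vxy x y) /\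
    is_derive (fun t => vy t y) x (vyx x y) /\ is_derive (fun t => vy x t) y (vyy x y) /\
    continuity_2d_pt uxx x y /\ continuity_2d_pt uxy x y /\ continuity_2d_pt vxx x y /\ continuity_2d_pt vxy x y /\
    uyx x y = uxy x y /\ uyy x y = - uxx x y /\ vyx x y = vxy x y /\ vyy x y = - vxx x y) ->
  holo (fun x y => k1 * ux x y + k2 * uy x y + k3 * vx x y + k4 * vy x y)
       (fun x y => k2 * ux x y + (- k1) * uy x y + k4 * vx x y + (- k3) * vy x y)
       (fun x y => k1 * uxx x y + k2 * uxy x y + k3 * vxx x y + k4 * vxy x y)
       (fun x y => k1 * uxy x y - k2 * uxx x y + k3 * vxy x y - k4 * vxx x y).
Proof.
  intros H x y Hxy.
  destruct (H x y Hxy) as [a1 [a2 [b1 [b2 [c1 [c2 [d1 [d2 [C1 [C2 [C3 [C4 [E1 [E2 [E3 E4]]]]]]]]]]]]]]].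
  split; [|split; [|split; [|split; [|split]]]].
  - pose proof (dadd _ _ _ _ _ (dadd _ _ _ _ _ (dadd _ _ _ _ _ (dscal _ _ k1 _ a1) (dscal _ _ k2 _ b1)) (dscal _ _ k3 _ c1)) (dscal _ _ k4 _ d1)) as D.
    eapply dval; [exact D|]. rewrite E1, E3; ring.
  - pose proof (dadd _ _ _ _ _ (dadd _ _ _ _ _ (dadd _ _ _ _ _ (dscal _ _ k1 _ a2) (dscal _ _ k2 _ b2)) (dscal _ _ k3 _ c2)) (dscal _ _ k4 _ d2)) as D.
    eapply dval; [exact D|]. rewrite E2, E4; ring.
  - pose proof (dadd _ _ _ _ _ (dadd _ _ _ _ _ (dadd _ _ _ _ _ (dscal _ _ k2 _ a1) (dscal _ _ (- k1) _ b1)) (dscal _ _ k4 _ c1)) (dscal _ _ (- k3) _ d1)) as D.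
    eapply dval; [exact D|]. rewrite E1, E3; ring.
  - pose proof (dadd _ _ _ _ _ (dadd _ _ _ _ _ (dadd _ _ _ _ _ (dscal _ _ k2 _ a2) (dscal _ _ (- k1) _ b2)) (dscal _ _ k4 _ c2)) (dscal _ _ (- k3) _ d2)) as D.
    eapply dval; [exact D|]. rewrite E2, E4; ring.
  - ct.
  - ct.
Qed.
Lemma idents a b c d co si C0 S0 A B X Y : co^2+si^2 = 1 ->
  C0 = co^2 - si^2 -> S0 = 2*si*co ->
  A = (a+d)/2 + C0*(a-d)/2 + S0*(c+b)/2 ->
  B = (c-b)/2 + S0*(a-d)/2 - C0*(c+b)/2 ->
  X = C0*(a-d)/2 + S0*(c+b)/2 ->
  Y = S0*(a-d)/2 - C0*(c+b)/2 ->
  A*A+B*B - 2*(X*A+Y*B) = a*d - b*c /\ A*A + B*B = (co*a+si*c)^2 + (co*b+si*d)^2.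
Proof.
  intros K HC HS HA HB HX HY.
  assert (K2 : C0^2 + S0^2 = 1) by (rewrite HC, HS; replace 1 with ((co^2+si^2)^2) by (rewrite K; ring); ring).
  split.
  - replace (a*d-b*c) with (a*d - b*c + (1 - (C0^2+S0^2))*(((a-d)/2)^2 + ((c+b)/2)^2)) by (rewrite K2; ring).
    subst A B X Y. field.
  - assert (EA : A = (a+d)/2*(co^2+si^2) + C0*(a-d)/2 + S0*(c+b)/2) by (rewrite HA, K; field).
    assert (EB : B = (c-b)/2*(co^2+si^2) + S0*(a-d)/2 - C0*(c+b)/2) by (rewrite HB, K; field).
    rewrite EA, EB.
    replace ((co*a+si*c)^2 + (co*b+si*d)^2) with ((co^2+si^2)*((co*a+si*c)^2 + (co*b+si*d)^2)) by (rewrite K; ring).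
    subst C0 S0. field.
Qed.

Definition LA (k1 k2 k3 k4 : R) (a b c d : R -> R -> R) x y := k1 * a x y + k2 * b x y + k3 * c x y + k4 * d x y.

Lemma cw_LA D k1 k2 k3 k4 a b c d x y : cont_within D a x y -> cont_within D b x y ->
  cont_within D c x y -> cont_within D d x y -> cont_within D (LA k1 k2 k3 k4 a b c d) x y.
Proof.
  intros. unfold LA. repeat apply cw_plus; apply cw_mult; auto; apply cw_const.
Qed.

Lemma dua (al : R) (u v : R -> R -> R) ux vx x y : is_derive (fun t => u t y) x ux -> is_derive (fun t => v t y) x vx ->
  Derive (fun t => cos al * u t y + sin al * v t y) x = cos al * ux + sin al * vx.
Proof. intros H1 H2. apply is_derive_unique. apply dadd; apply dscal; auto. Qed.

Lemma dua' (al : R) (u v : R -> R -> R) uy vy x y : is_derive (fun t => u x t) y uy -> is_derive (fun t => v x t) y vy ->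
  Derive (fun t => cos al * u x t + sin al * v x t) y = cos al * uy + sin al * vy.
Proof. intros H1 H2. apply is_derive_unique. apply dadd; apply dscal; auto. Qed.

Lemma half_lt p n : 0 < n -> 2 * p < n -> p / n < 1/2.
Proof. intros Hn H. assert (p / n * n = p) by (field; lra). assert (p / n * n < 1/2 * n) by lra. nra. Qed.

Lemma half_lt' p n : 0 < n -> p / n < 1/2 -> 2 * p < n.
Proof. intros Hn H. assert (p / n * n = p) by (field; lra). nra. Qed.

Definition cC al := cos al ^ 2 - sin al ^ 2.
Definition sS al := 2 * sin al * cos al.

Theorem corollary3p3 (u v ux uy vx vy : R -> R -> R)
  (hu1 : C1_closB u ux uy) (hv1 : C1_closB v vx vy)
  (hu : harmonic_B u ux uy) (hv : harmonic_B v vx vy)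
  (hbd : forall x y, in_bdB x y -> ux x y * vy x y - uy x y * vx x y > 0) :
  (forall x y, in_B x y -> dx u x y * dy v x y - dy u x y * dx v x y > 0) <->
  (exists alpha : R, 0 <= alpha <= 2 * PI /\
     forall x y, in_B x y ->
       let ua := fun s t => cos alpha * u s t + sin alpha * v s t in
       (dx ua x y, dy ua x y) <> (0, 0)).
Proof.
  destruct hu1 as [Hu1d Hu1c]. destruct hv1 as [Hv1d Hv1c].
  destruct hu as [_ [uxx [uxy [uyx [uyy Hu2]]]]].
  destruct hv as [_ [vxx [vxy [vyx [vyy Hv2]]]]].
  assert (Du : forall x y, in_B x y -> dx u x y = ux x y /\ dy u x y = uy x y).
  { intros x y H; unfold dx, dy; split; apply is_derive_unique; apply (Hu1d x y H). }
  assert (Dv : forall x y, in_B x y -> dx v x y = vx x y /\ dy v x y = vy x y).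
  { intros x y H; unfold dx, dy; split; apply is_derive_unique; apply (Hv1d x y H). }
  assert (Dua : forall al x y, in_B x y ->
     dx (fun s t => cos al * u s t + sin al * v s t) x y = cos al * ux x y + sin al * vx x y /\
     dy (fun s t => cos al * u s t + sin al * v s t) x y = cos al * uy x y + sin al * vy x y).
  { intros al x y H. unfold dx, dy. split.
    - apply dua; [apply (Hu1d x y H)|apply (Hv1d x y H)].
    - apply dua'; [apply (Hu1d x y H)|apply (Hv1d x y H)]. }
  split.
  - intros Hdet. exists 0. split. split; [lra|pose proof PI_RGT_0; lra].
    intros x y Hxy ua. unfold ua. destruct (Dua 0 x y Hxy) as [E1 E2]. rewrite E1, E2.
    rewrite cos_0, sin_0. intros Heq. injection Heq; intros Hb Ha.
    specialize (Hdet x y Hxy). destruct (Du x y Hxy) as [F1 F2]. rewrite F1, F2 in Hdet. nra.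
  - intros [al [_ Hgrad]].
    assert (K : cos al ^ 2 + sin al ^ 2 = 1) by (pose proof (sin2_cos2 al); unfold Rsqr in *; nra).
    assert (Su : forall x y, in_B x y -> uxy x y = uyx x y).
    { apply (schwarz_B u ux uy uxy uyx). intros x y H.
      destruct (Hu2 x y H) as [h1 [h2 [h3 [h4 [h5 [h6 [h7 [h8 h9]]]]]]]].
      destruct (Hu1d x y H) as [g1 g2].
      split; [exact g1|split; [exact g2|split; [exact h2|split; [exact h3|split; apply cw_2d; auto]]]]. }
    assert (Sv : forall x y, in_B x y -> vxy x y = vyx x y).
    { apply (schwarz_B v vx vy vxy vyx). intros x y H.
      destruct (Hv2 x y H) as [h1 [h2 [h3 [h4 [h5 [h6 [h7 [h8 h9]]]]]]]].
      destruct (Hv1d x y H) as [g1 g2].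
      split; [exact g1|split; [exact g2|split; [exact h2|split; [exact h3|split; apply cw_2d; auto]]]]. }
    assert (HL : forall x y, in_B x y ->
    is_derive (fun t => ux t y) x (uxx x y) /\ is_derive (fun t => ux x t) y (uxy x y) /\
    is_derive (fun t => uy t y) x (uyx x y) /\ is_derive (fun t => uy x t) y (uyy x y) /\
    is_derive (fun t => vx t y) x (vxx x y) /\ is_derive (fun t => vx x t) y (vxy x y) /\
    is_derive (fun t => vy t y) x (vyx x y) /\ is_derive (fun t => vy x t) y (vyy x y) /\
    continuity_2d_pt uxx x y /\ continuity_2d_pt uxy x y /\ continuity_2d_pt vxx x y /\ continuity_2d_pt vxy x y /\
    uyx x y = uxy x y /\ uyy x y = - uxx x y /\ vyx x y = vxy x y /\ vyy x y = - vxx x y).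
    { intros x y H.
      destruct (Hu2 x y H) as [h1 [h2 [h3 [h4 [h5 [h6 [h7 [h8 h9]]]]]]]].
      destruct (Hv2 x y H) as [i1 [i2 [i3 [i4 [i5 [i6 [i7 [i8 i9]]]]]]]].
      pose proof (Su x y H). pose proof (Sv x y H).
      do 8 (split; [assumption|]).
      split; [apply cw_2d; auto|]. split; [apply cw_2d; auto|].
      split; [apply cw_2d; auto|]. split; [apply cw_2d; auto|].
      repeat split; lra. }
    pose (A := LA ((1 + cC al)/2) (sS al/2) (sS al/2) ((1 - cC al)/2) ux uy vx vy).
    pose (B := LA (sS al/2) (- ((1 + cC al)/2)) ((1 - cC al)/2) (- (sS al/2)) ux uy vx vy).
    pose (X := LA (cC al/2) (sS al/2) (sS al/2) (- (cC al/2)) ux uy vx vy).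
    pose (Y := LA (sS al/2) (- (cC al/2)) (- (cC al/2)) (- (sS al/2)) ux uy vx vy).
    pose proof (lin_holo ux uy vx vy uxx uxy uyx uyy vxx vxy vyx vyy ((1 + cC al)/2) (sS al/2) (sS al/2) ((1 - cC al)/2) HL) as HA.
    pose proof (lin_holo ux uy vx vy uxx uxy uyx uyy vxx vxy vyx vyy (cC al/2) (sS al/2) (sS al/2) (- (cC al/2)) HL) as HX.
    assert (ID : forall x y,
      A x y * A x y + B x y * B x y - 2 * (X x y * A x y + Y x y * B x y) = ux x y * vy x y - uy x y * vx x y /\
      A x y * A x y + B x y * B x y = (cos al * ux x y + sin al * vx x y)^2 + (cos al * uy x y + sin al * vy x y)^2).
    { intros x y. apply (idents _ _ _ _ (cos al) (sin al) (cC al) (sS al)); auto;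
        unfold A, B, X, Y, LA; field. }
    assert (NZ : forall x y, in_closB x y -> A x y * A x y + B x y * B x y <> 0).
    { intros x y Hc. destruct (classic (in_B x y)) as [HB|HnB].
      - specialize (Hgrad x y HB). cbv zeta in Hgrad. destruct (Dua al x y HB) as [E1 E2].
        rewrite E1, E2 in Hgrad. intros Hz. apply Hgrad. destruct (ID x y) as [_ I2]. rewrite I2 in Hz.
        set (p := cos al * ux x y + sin al * vx x y) in *. set (q := cos al * uy x y + sin al * vy x y) in *.
        assert (p = 0) by (pose proof (pow2_ge_0 p); pose proof (pow2_ge_0 q); nra).
        assert (q = 0) by (pose proof (pow2_ge_0 p); pose proof (pow2_ge_0 q); nra).
        rewrite H, H0; reflexivity.
      - assert (Hb : in_bdB x y) by (unfold in_B, in_closB, in_bdB in *; lra).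
        specialize (hbd x y Hb). destruct (ID x y) as [I1 _]. intros Hz.
        assert (A x y = 0) by nra. assert (B x y = 0) by nra.
        rewrite H, H0 in I1. lra. }
    pose proof (quot_holo A B X Y _ _ _ _ HA HX (fun x y H => NZ x y (or_introl H))) as HQ.
    intros x y Hxy.
    assert (Hmax : qphi A B X Y x y < 1/2).
    { apply (max_principle _ _ _ _ (1/2) HQ); auto.
      - intros x' y' Hc. unfold qphi. apply cw_div; [|apply cw_plus; apply cw_mult; apply cw_LA; try apply Hu1c; try apply Hv1c; auto|apply NZ; auto].
        apply cw_plus; apply cw_mult; apply cw_LA; try apply Hu1c; try apply Hv1c; auto.
      - intros x' y' Hb. unfold qphi. apply half_lt.
        + assert (Hc : in_closB x' y') by (unfold in_closB, in_bdB in *; lra).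
          pose proof (NZ x' y' Hc). nra.
        + specialize (hbd x' y' Hb). destruct (ID x' y') as [I1 _]. lra. }
    unfold qphi in Hmax. apply half_lt' in Hmax.
    + destruct (ID x y) as [I1 _]. destruct (Du x y Hxy) as [F1 F2]. destruct (Dv x y Hxy) as [G1 G2].
      rewrite F1, F2, G1, G2. lra.
    + assert (Hc : in_closB x y) by (unfold in_closB, in_B in *; lra).
      pose proof (NZ x y Hc). nra.
Qed.
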